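(* For every integer $n\ge 0$, $$\Phi^{(2)}[a; bq^n, b'; c, c'; x, y] = \sum_{k=0}^n \begin{bmatrix} n \\ k \end{bmatrix} q^{2\binom{k}{2}} \frac{(bx)^k (a; q)_k}{(c; q)_k} \Phi^{(2)}[aq^k; bq^k, b'; cq^k, c'; x, y]$$ and $$\Phi^{(2)}[a; bq^{-n}, b'; c, c'; x, y] = \sum_{k=0}^n \begin{bmatrix} n \\ k \end{bmatrix} q^{\binom{k}{2} - nk} \frac{(-bx)^k (a; q)_k}{(c; q)_k} \Phi^{(2)}[aq^k; b, b'; cq^k, c'; x, y].$$
   Context: Let $q$ be a complex number with $0<|q|<1$. For complex $z$ and integer $m\ge 0$, $(z;q)_m=\prod_{j=0}^{m-1}(1-zq^j)$, with $(z;q)_0=1$. For integers $0\le k\le n$, $\begin{bmatrix} n \\ k \end{bmatrix}=\frac{(q;q)_n}{(q;q)_k(q;q)_{n-k}}$ is the $q$-binomial coefficient. The $q$-Appell function $\Phi^{(2)}$ is $$\Phi^{(2)}[a; b, b'; c, c'; x, y] = \sum_{m, n \geq 0} \frac{(a; q)_{m+n} (b; q)_m (b'; q)_n}{(q; q)_m (q; q)_n (c; q)_m (c'; q)_n} x^m y^n.$$ Identities are understood as identities of power series in $x,y$ (formal, or convergent for small $|x|,|y|$), with complex parameters chosen so that no denominator occurring vanishes. *)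

(* Defs.v *)
From HB Require Import structures.
From mathcomp Require Import all_boot all_order all_algebra.
From mathcomp Require Import complex.
From mathcomp Require Import reals.
Set Implicit Arguments. Unset Strict Implicit. Unset Printing Implicit Defensive.
Import Order.TTheory GRing.Theory Num.Theory.
Local Open Scope ring_scope.
Local Open Scope complex_scope.

Section Defs.
Variable R : realType.
Local Notation C := R[i].

Definition qpoch (z q : C) (m : nat) : C := \prod_(j < m) (1 - z * q ^+ j).

Definition qbinom (q : C) (n k : nat) : C :=
  qpoch q q n / (qpoch q q k * qpoch q q (n - k)).

(** formal power series in x,y : coefficient of x^m y^l *)
Definition fps2 := nat -> nat -> C.

Definition Phi2 (q a b b' c c' : C) : fps2 := fun m l =>
  qpoch a q (m + l) * qpoch b q m * qpoch b' q l /
  (qpoch q q m * qpoch q q l * qpoch c q m * qpoch c' q l).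

Definition fps2_scale (s : C) (F : fps2) : fps2 := fun m l => s * F m l.

Definition fps2_mulX (k : nat) (F : fps2) : fps2 :=
  fun m l => if (k <= m)%N then F (m - k)%N l else 0.

Definition fps2_sum (n : nat) (G : nat -> fps2) : fps2 :=
  fun m l => \sum_(k < n.+1) G k m l.
End Defs.

(* Main.v *)
Require Import Defs.
From HB Require Import structures.
From mathcomp Require Import all_boot all_order all_algebra.
From mathcomp Require Import complex.
From mathcomp Require Import reals.
From mathcomp Require Import ring.
Import Order.TTheory GRing.Theory Num.Theory.
Local Open Scope ring_scope.
Local Open Scope complex_scope.

Section Helpers.
Variable R : realType.
Local Notation C := R[i].
Variable q : C.
Hypothesis q0 : 0 < `|q|.
Hypothesis q1 : `|q| < 1.

Lemma qpoch0 z : qpoch z q 0 = 1.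
Proof. by rewrite /qpoch big_ord0. Qed.

Lemma qpochS z m : qpoch z q m.+1 = qpoch z q m * (1 - z * q ^+ m).
Proof. by rewrite /qpoch big_ord_recr. Qed.

Lemma qpochSl z m : qpoch z q m.+1 = (1 - z) * qpoch (z * q) q m.
Proof.
rewrite /qpoch big_ord_recl /= expr0 mulr1; congr (_ * _).
by apply: eq_bigr => i _; rewrite /bump /= add1n exprS mulrA.
Qed.

Lemma qpoch_add z k j : qpoch z q (k + j) = qpoch z q k * qpoch (z * q ^+ k) q j.
Proof.
elim: j => [|j IH]; first by rewrite addn0 qpoch0 mulr1.
by rewrite addnS !qpochS IH exprD !mulrA.
Qed.

Lemma qneq0 : q != 0.
Proof. by rewrite -normr_gt0. Qed.

Lemma qpow_neq1 j : 1 - q ^+ j.+1 != 0.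
Proof.
rewrite subr_eq0; apply/eqP => h.
have : `|q ^+ j.+1| < 1 by rewrite normrX exprn_ilt1 // ltW.
by rewrite -h normr1 ltxx.
Qed.

Lemma qq_neq0 m : qpoch q q m != 0.
Proof.
elim: m => [|m IH]; first by rewrite qpoch0 oner_neq0.
by rewrite qpochS mulf_neq0 // -exprS qpow_neq1.
Qed.

Definition T z m := qpoch z q m / qpoch q q m.
Definition U z m k := if (k <= m)%N then T z (m - k) else 0.

Lemma T_rec z j : T z j.+1 = T (z * q) j.+1 - z * T (z * q) j.
Proof.
rewrite /T qpochSl !qpochS.
have h1 := qq_neq0 j. have h2 : 1 - q * q ^+ j != 0 by rewrite -exprS qpow_neq1.

field. by rewrite h1 h2.
Qed.

Lemma U_rec z m k : U z m k = U (z * q) m k - z * U (z * q) m k.+1.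
Proof.
rewrite /U; case: (leqP k m) => h.
- case: (leqP k.+1 m) => h2.
  + rewrite -(subnSK h2); exact: T_rec.
  + have -> : k = m by apply/eqP; rewrite eqn_leq h -ltnS.
    by rewrite subnn /T !qpoch0 mulr0 subr0.
- by rewrite ltnNge ltnW // mulr0 subr0.
Qed.

Definition qbz n k := if (k <= n)%N then qbinom q n k else 0.

Lemma qbinom_n0 n : qbinom q n 0 = 1.
Proof. rewrite /qbinom qpoch0 subn0 mul1r divff //; exact: qq_neq0. Qed.

Lemma qbinom_nn n : qbinom q n n = 1.
Proof. rewrite /qbinom subnn qpoch0 mulr1 divff //; exact: qq_neq0. Qed.

Lemma qbz_n0 n : qbz n 0 = 1.
Proof. by rewrite /qbz qbinom_n0. Qed.

Lemma qbz_gt n k : (n < k)%N -> qbz n k = 0.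
Proof. by rewrite /qbz ltnNge => /negbTE ->. Qed.

Lemma qbinom_add a b : qbinom q (a + b) a = qpoch q q (a + b) / (qpoch q q a * qpoch q q b).
Proof. by rewrite /qbinom addKn. Qed.

Lemma qbinom_mid k r :
  [/\ qbinom q (k.+1 + r).+1 k.+1 =
      qpoch q q (k.+1 + r) * (1 - q * (q * q ^+ k * q ^+ r)) /
      (qpoch q q k * (1 - q * q ^+ k) * (qpoch q q r * (1 - q * q ^+ r))),
      qbinom q (k.+1 + r) k =
      qpoch q q (k.+1 + r) / (qpoch q q k * (qpoch q q r * (1 - q * q ^+ r)))
    & qbinom q (k.+1 + r) k.+1 =
      qpoch q q (k.+1 + r) / (qpoch q q k * (1 - q * q ^+ k) * qpoch q q r)].
Proof.
split.
- by rewrite -addnS qbinom_add addnS (qpochS _ (k.+1 + r)) (qpochS _ k) (qpochS _ r) exprD exprS.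
- by rewrite addSnnS qbinom_add -addSnnS (qpochS _ r).
- by rewrite qbinom_add (qpochS _ k).
Qed.

Lemma P1 n k : qbz n.+1 k.+1 = qbz n k + q ^+ k.+1 * qbz n k.+1.
Proof.
rewrite /qbz ltnS; case: (leqP k n) => h; last first.
  by rewrite ltnNge (ltnW h) /= mulr0 addr0.
case: (leqP k.+1 n) => h2; last first.
  have -> : k = n by apply/eqP; rewrite eqn_leq h -ltnS.
  by rewrite mulr0 addr0 !qbinom_nn.
have [r ->] : exists r, n = (k.+1 + r)%N by exists (n - k.+1)%N; rewrite subnKC.
have [-> -> ->] := qbinom_mid k r.
have a0 := qq_neq0 (k.+1 + r). have a1 := qq_neq0 k. have a2 := qq_neq0 r.
have a3 : 1 - q * q ^+ k != 0 by rewrite -exprS qpow_neq1.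
have a4 : 1 - q * q ^+ r != 0 by rewrite -exprS qpow_neq1.
rewrite exprS. field. by rewrite a1 a2 a3 a4.
Qed.

Lemma P2 n k : qbz n.+1 k.+1 = qbz n k.+1 + q ^+ (n - k) * qbz n k.
Proof.
rewrite /qbz ltnS; case: (leqP k n) => h; last first.
  by rewrite ltnNge (ltnW h) /= mulr0 addr0.
case: (leqP k.+1 n) => h2; last first.
  have -> : k = n by apply/eqP; rewrite eqn_leq h -ltnS.
  by rewrite subnn expr0 mul1r add0r !qbinom_nn.
have [r ->] : exists r, n = (k.+1 + r)%N by exists (n - k.+1)%N; rewrite subnKC.
have [-> -> ->] := qbinom_mid k r.
have a0 := qq_neq0 (k.+1 + r). have a1 := qq_neq0 k. have a2 := qq_neq0 r.
have a3 : 1 - q * q ^+ k != 0 by rewrite -exprS qpow_neq1.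
have a4 : 1 - q * q ^+ r != 0 by rewrite -exprS qpow_neq1.
rewrite addSnnS addKn exprS. field. by rewrite a1 a2 a3 a4.
Qed.


Lemma shiftA n (F : nat -> C) :
  \sum_(0 <= k < n.+2) qbz n.+1 k * F k =
  \sum_(0 <= k < n.+1) (q ^+ k * qbz n k * F k + qbz n k * F k.+1).
Proof.
rewrite big_split /= big_nat_recl // qbz_n0 mul1r.
under eq_big_nat => i _ do rewrite P1 mulrDl.
rewrite big_split /= addrCA addrC; congr (_ + _).
rewrite [RHS]big_nat_recl // expr0 mul1r qbz_n0 mul1r; congr (_ + _).
by rewrite big_nat_recr //= qbz_gt // mulr0 mul0r addr0.
Qed.

Lemma shiftB n (F : nat -> C) :
  \sum_(0 <= k < n.+2) qbz n.+1 k * F k =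
  \sum_(0 <= k < n.+1) (qbz n k * F k + q ^+ (n - k) * qbz n k * F k.+1).
Proof.
rewrite big_split /= big_nat_recl // qbz_n0 mul1r.
under eq_big_nat => i _ do rewrite P2 mulrDl.
rewrite big_split /= addrA; congr (_ + _).
rewrite [RHS]big_nat_recl // qbz_n0 mul1r big_nat_recr //= qbz_gt // mul0r addr0.
by [].
Qed.

Lemma idA n : forall b m, T (b * q ^+ n) m =
  \sum_(0 <= k < n.+1) qbz n k * q ^+ (2 * 'C(k, 2)) * b ^+ k * U (b * q ^+ k) m k.
Proof.
elim: n => [|n IH] b m.
  by rewrite big_nat1 qbz_n0 /U /= subn0 !expr0 !mul1r.
under eq_big_nat => i _ do rewrite -!mulrA.
rewrite shiftA exprS mulrA IH.
apply: eq_big_nat => k _.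
rewrite (U_rec (b * q ^+ k)) binS bin1 mulnDr exprD !exprS !mulrA.
have -> : b * q * q ^+ k = b * q ^+ k * q by rewrite -!mulrA (mulrC q).
rewrite exprMn (mul2n k) -addnn exprD; ring.
Qed.

Lemma idB n : forall b m, T b m =
  \sum_(0 <= k < n.+1) qbz n k * q ^+ 'C(k, 2) * (- b) ^+ k * U (b * q ^+ n) m k.
Proof.
elim: n => [|n IH] b m.
  by rewrite big_nat1 qbz_n0 /U /= subn0 !expr0 !mul1r mulr1.
under eq_big_nat => i _ do rewrite -!mulrA.
rewrite shiftB IH.
apply: eq_big_nat => k /andP [_ hk].
rewrite (U_rec (b * q ^+ n)) binS bin1 exprD !exprS !mulrA.
have -> : b * q * q ^+ n = b * q ^+ n * q by rewrite -!mulrA (mulrC q).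
set u0 := U _ m k. set u1 := U _ m k.+1.
have -> : q ^+ n = q ^+ (n - k) * q ^+ k by rewrite -exprD subnK.
ring.
Qed.


Lemma term (a be b' c c' s : C) k m l :
  (forall j, qpoch c q j != 0) -> (forall j, qpoch c' q j != 0) ->
  s * qpoch a q k / qpoch c q k *
    (if (k <= m)%N then Phi2 q (a * q ^+ k) be b' (c * q ^+ k) c' (m - k)%N l else 0)
  = (qpoch a q (m + l)%N * qpoch b' q l / (qpoch q q l * qpoch c q m * qpoch c' q l))
    * (s * U be m k).
Proof.
move=> hc hc'; rewrite /U; case: (leqP k m) => h; last by rewrite !mulr0.
have [j ->] : exists j, m = (k + j)%N by exists (m - k)%N; rewrite subnKC.
rewrite addKn /Phi2 /T -addnA !qpoch_add.
have [c1 c2] : qpoch c q k != 0 /\ qpoch (c * q ^+ k) q j != 0.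
  by have := hc (k + j); rewrite qpoch_add mulf_eq0 negb_or => /andP[].
have c3 := hc' l. have c4 := qq_neq0 j. have c5 := qq_neq0 l.
field. by rewrite c1 c2 c3 c4 c5.
Qed.

Lemma lhs (a be b' c c' : C) m l :
  (forall j, qpoch c q j != 0) -> (forall j, qpoch c' q j != 0) ->
  Phi2 q a be b' c c' m l =
  (qpoch a q (m + l)%N * qpoch b' q l / (qpoch q q l * qpoch c q m * qpoch c' q l))
    * T be m.
Proof.
move=> hc hc'; rewrite /Phi2 /T.
have c3 := hc' l. have c4 := qq_neq0 m. have c5 := qq_neq0 l. have c1 := hc m.
field. by rewrite c1 c3 c4 c5.
Qed.

End Helpers.

From Stdlib Require Import FunctionalExtensionality.

Theorem theorem9 (R : realType) (q a b b' c c' : R[i]) (n : nat) :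
  0 < `|q| -> `|q| < 1 ->
  (forall m : nat, qpoch c q m != 0) ->
  (forall m : nat, qpoch c' q m != 0) ->
  Phi2 q a (b * q ^+ n) b' c c'
    = fps2_sum n (fun k =>
        fps2_scale (qbinom q n k * q ^+ (2 * 'C(k, 2)) * b ^+ k
                    * qpoch a q k / qpoch c q k)
          (fps2_mulX k (Phi2 q (a * q ^+ k) (b * q ^+ k) b' (c * q ^+ k) c')))
  /\
  Phi2 q a (b * q ^- n) b' c c'
    = fps2_sum n (fun k =>
        fps2_scale (qbinom q n k * q ^ ('C(k, 2)%:Z - (n * k)%:Z) * (- b) ^+ k
                    * qpoch a q k / qpoch c q k)
          (fps2_mulX k (Phi2 q (a * q ^+ k) b b' (c * q ^+ k) c'))).
Proof.
move=> q0 q1 hc hc'.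
split; apply: functional_extensionality => m; apply: functional_extensionality => l;
  rewrite /fps2_sum /fps2_scale /fps2_mulX (@lhs R q q1) //.
- under eq_bigr => k _ do rewrite (@term R q q1) //.
  rewrite -mulr_sumr (@idA R q q1 n b m) big_mkord; congr (_ * _).
  apply: eq_bigr => k _.
  by rewrite /qbz -ltnS ltn_ord.
- under eq_bigr => k _ do rewrite (@term R q q1) //.
  rewrite -mulr_sumr (@idB R q q1 n (b * q ^- n) m) big_mkord; congr (_ * _).
  apply: eq_bigr => k _. have hk := ltn_ord k.
  have qn : q ^+ n != 0 by rewrite expf_neq0 // (@qneq0 R q q0).
  rewrite /qbz -ltnS hk mulfVK //.
  rewrite expfzDr ?(@qneq0 R q q0) // -exprnN -exprnP exprM -mulNr exprMn exprVn.
  set Z := qbinom _ _ _. set X := U _ _ _ _ _. set Y := q ^+ n ^+ k. set W := q ^+ _. set B := (- b) ^+ k. by rewrite !mulrA (mulrAC _ B) (mulrAC _ B).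
Qed.
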